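(* Let $n\ge 1$ and $K,T\in\mathcal S_n$. Then \[ \frac{K^c+T^c}{2}=\left\{x\in\mathbb R^n:\ \mathrm{Outrad}\big((K-x)\cup(x-T)\big)\le 1\right\}. \]
   Context: $B(x,r)$ is the closed Euclidean ball. For $A\subseteq\mathbb R^n$, $A^c=\bigcap_{x\in A}B(x,1)$ (with $\emptyset^c=\mathbb R^n$). $\mathcal S_n$ is the class of all sets of the form $\bigcap_{x\in A}B(x,1)$, $A\subseteq\mathbb R^n$. For a set $A$, $\mathrm{Outrad}(A)$ is the out-radius: the infimum of $R\ge0$ such that $A\subseteq B(z,R)$ for some $z\in\mathbb R^n$. $K-x=\{k-x:k\in K\}$, $x-T=\{x-t:t\in T\}$, and the sum on the left is the Minkowski sum. *)

(* Defs.v *)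
From HB Require Import structures.
From mathcomp Require Import all_boot all_order all_algebra.
From mathcomp Require Import all_classical all_reals.
From mathcomp Require Import ereal.
Set Implicit Arguments. Unset Strict Implicit. Unset Printing Implicit Defensive.
Import Order.TTheory GRing.Theory Num.Theory.
Local Open Scope classical_set_scope.
Local Open Scope ring_scope.

Definition enorm (R : realType) (n : nat) (v : 'rV[R]_n) : R :=
  Num.sqrt (\sum_(i < n) v ord0 i ^+ 2).

Definition cball (R : realType) (n : nat) (x : 'rV[R]_n) (r : R) : set 'rV[R]_n :=
  [set y | enorm (y - x) <= r].

(* A^c = \bigcap_{x in A} B(x,1)  (empty intersection = R^n) *)
Definition bpolar (R : realType) (n : nat) (A : set 'rV[R]_n) : set 'rV[R]_n :=
  [set y | forall x, A x -> cball x 1 y].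

Definition in_Sn (R : realType) (n : nat) (K : set 'rV[R]_n) : Prop :=
  exists A : set 'rV[R]_n, K = bpolar A.

(* out-radius, as an extended real (+oo for unbounded sets) *)
Definition Outrad (R : realType) (n : nat) (A : set 'rV[R]_n) : \bar R :=
  ereal_inf [set r%:E | r in
    [set r : R | 0 <= r /\ exists z : 'rV[R]_n, A `<=` cball z r]].

Definition halfsum (R : realType) (n : nat) (A B : set 'rV[R]_n) : set 'rV[R]_n :=
  [set z | exists a b, A a /\ B b /\ z = 2^-1 *: (a + b)].

Definition KxT (R : realType) (n : nat) (K T : set 'rV[R]_n) (x : 'rV[R]_n)
  : set 'rV[R]_n :=
  [set k - x | k in K] `|` [set x - t | t in T].

(* Main.v *)
Require Import Defs.
From HB Require Import structures.
From mathcomp Require Import all_boot all_order all_algebra.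
From mathcomp Require Import all_classical all_reals.
From mathcomp Require Import ereal all_analysis.
From mathcomp Require Import lra.
Import Order.TTheory GRing.Theory Num.Theory.
Import numFieldNormedType.Exports.
Local Open Scope classical_set_scope.
Local Open Scope ring_scope.

Lemma sum_cont (R : realType) n (g : 'I_n -> 'rV[R]_n -> R) (r : seq 'I_n) :
  (forall i, continuous (g i)) -> continuous (fun w => \sum_(i <- r) g i w).
Proof.
move=> hg; elim: r => [|i r IH].
  have -> : (fun w : 'rV[R]_n => \sum_(j <- [::]) g j w) = (fun=> 0).
    by apply/funext => w; rewrite big_nil.
  by move=> w; exact: cst_continuous.
have -> : (fun w => \sum_(j <- i :: r) g j w) = (g i + fun w => \sum_(j <- r) g j w).
  by apply/funext => w; rewrite big_cons.
by move=> w; apply: continuousD; [exact: hg|exact: IH].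
Qed.

Lemma enorm_cont (R : realType) n (a : 'rV[R]_n) :
  continuous (fun w : 'rV[R]_n => enorm (a - w)).
Proof.
rewrite /enorm.
have hc : continuous (fun w : 'rV[R]_n => \sum_(i < n) (a - w) ord0 i ^+ 2).
  apply: sum_cont => i.
  have -> : (fun w : 'rV[R]_n => (a - w) ord0 i ^+ 2) =
     (fun w : 'rV[R]_n => a ord0 i - w ord0 i) \* (fun w : 'rV[R]_n => a ord0 i - w ord0 i).
    by apply/funext => w /=; rewrite !mxE expr2.
  move=> w; apply: continuousM; apply: continuousB; 
    [exact: cst_continuous|exact: coord_continuous|exact: cst_continuous|exact: coord_continuous].
move=> w; apply: continuous_comp; first exact: hc.
exact: sqrt_continuous.
Qed.

Lemma enormN (R : realType) n (v : 'rV[R]_n) : enorm (- v) = enorm v.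
Proof. by rewrite /enorm; congr Num.sqrt; apply: eq_bigr => i _; rewrite mxE sqrrN. Qed.

Lemma coord_le (R : realType) n (v : 'rV[R]_n) i : `|v ord0 i| <= enorm v.
Proof.
rewrite /enorm -sqrtr_sqr; apply: ler_wsqrtr.
rewrite (bigD1 i) //= lerDl; apply: sumr_ge0 => j _; exact: sqr_ge0.
Qed.

Arguments coord_le {R n}.
Arguments enorm_cont {R n}.
Arguments enormN {R n}.

Lemma attain (R : realType) n (A : set 'rV[R]_n) :
  (Outrad A <= 1%:E)%E -> exists z, A `<=` cball z 1.
Proof.
move=> hO.
have [->|/set0P [a0 Aa0]] := eqVneq A set0.
  by exists 0 => y.
have hF : forall e, 0 < e -> exists z, A `<=` cball z (1 + e).
  move=> e e0.
  have : (Outrad A < (1 + e)%:E)%E.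
    by apply: le_lt_trans hO _; rewrite lte_fin ltrDl.
  move/ereal_inf_lt => [_ [r [r0 [z Az]] <-] rlt].
  exists z => y /Az; rewrite /cball /= => h; apply: le_trans h _.
  by apply: ltW; rewrite -lte_fin.
pose D := [set e : R | 0 < e].
pose B e := [set z : 'rV[R]_n | A `<=` cball z (1 + e)].
have FF : Filter (filter_from D B).
  apply: filter_from_filter; first by exists 1; rewrite /D /= ltr01.
  move=> i j Di Dj; exists (Order.min i j); first by rewrite /D /= lt_min Di Dj.
  move=> z Bz; split => y /Bz; rewrite /cball /= => h; apply: le_trans h _;
    rewrite lerD2l ge_min lexx ?orbT //.
have PF : ProperFilter (filter_from D B).
  apply: filter_from_proper => e /hF [z hz]; by exists z.
pose Bx := [set v : 'rV[R]_n | forall i, [set` `[a0 ord0 i - 2, a0 ord0 i + 2]] (v ord0 i)].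
have cB : compact Bx.
  exact: (@rV_compact R n (fun i => [set` `[a0 ord0 i - 2, a0 ord0 i + 2]]) (fun i => @segment_compact R _ _)).
have FB : filter_from D B Bx.
  exists 1; first by rewrite /D /= ltr01.
  move=> z Bz i; have := Bz _ Aa0; rewrite /cball /= => h.
  have := coord_le (a0 - z) i; rewrite mxE [in X in `|X|]mxE => h2.
  have h3 : `|z ord0 i - a0 ord0 i| <= 2.
    rewrite distrC; apply: le_trans h2 _; apply: le_trans h _.
    by [] .
  move: h3; rewrite ler_distl => h3.
  by rewrite /= in_itv /= h3.
have [z [_ cz]] := cB _ PF FB.
exists z => y Ay; rewrite /cball /=.
apply/ler_addgt0Pr => e e0.
have cl : closed [set w : 'rV[R]_n | enorm (y - w) <= 1 + e].
  have h1 := (continuous_closedP _).1 (enorm_cont y).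
  have h2 := @closed_le R (1 + e).
  exact: h1 _ h2.
apply: cl => N Nz; apply: cz Nz.
by exists e => // w Bw; exact: Bw _ Ay.
Qed.

Theorem lemma1p27 (R : realType) (n : nat) (hn : (1 <= n)%N)
  (K T : set 'rV[R]_n) (hK : in_Sn K) (hT : in_Sn T) :
  halfsum (bpolar K) (bpolar T) =
  [set x | (Outrad (KxT K T x) <= 1%:E)%E].
Proof.
rewrite eqEsubset; split.
  move=> _ [a [b [Ha [Hb ->]]]]; rewrite /=.
  apply: le_trans (ereal_inf_lbound _) _; last exact: lexx.
  exists 1 => //; split; first exact: ler01.
  exists (2^-1 *: (a - b)) => y [[k Kk <-]|[t Tt <-]]; rewrite /cball /=.
    have -> : k - 2^-1 *: (a + b) - 2^-1 *: (a - b) = - (a - k).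
      by apply/rowP => j; rewrite !mxE; lra.
    by rewrite enormN; exact: Ha.
  have -> : 2^-1 *: (a + b) - t - 2^-1 *: (a - b) = b - t.
    by apply/rowP => j; rewrite !mxE; lra.
  exact: Hb.
move=> x /attain [z hz]; exists (x + z), (x - z); split; [|split].
- move=> k Kk; rewrite /cball /=.
  have /= := hz (k - x) (or_introl (ex_intro2 _ _ k Kk erefl)).
  rewrite /cball /=.
  have -> : k - x - z = - (x + z - k) by apply/rowP => j; rewrite !mxE; lra.
  by rewrite enormN.
- move=> t Tt; rewrite /cball /=.
  have /= := hz (x - t) (or_intror (ex_intro2 _ _ t Tt erefl)).
  rewrite /cball /=.
  have -> : x - t - z = x - z - t by apply/rowP => j; rewrite !mxE; lra.
  by [].
- by apply/rowP => j; rewrite !mxE; lra.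
Qed.
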